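(* (Height-preserving weakening.) For all finite multisets of formulas $\Gamma,\Delta$, every formula $\nu$ and every $n\geq 1$: if $\vdash^n\Gamma\Rightarrow\Delta$ then $\vdash^n\Gamma,\nu\Rightarrow\Delta$ (left weakening), and if $\vdash^n\Gamma\Rightarrow\Delta$ then $\vdash^n\Gamma\Rightarrow\nu,\Delta$ (right weakening).
   Context: Fix a countably infinite set $\mathsf{Prop}$ of propositional variables. Classical formulas are generated by $\alpha ::= p \mid \bot \mid \neg\alpha \mid \alpha\wedge\alpha \mid \alpha\vee\alpha$ with $p\in\mathsf{Prop}$. Formulas are generated by $\phi ::= \alpha \mid \phi\wedge\phi \mid \phi\vee\phi \mid \phi\mathbin{\backslash\!\!/}\phi$ where $\alpha$ is classical ($\vee$: split disjunction, $\mathbin{\backslash\!\!/}$: inquisitive disjunction). A sequent is $\Gamma\Rightarrow\Delta$ with $\Gamma,\Delta$ finite multisets of formulas; ''$\Gamma,\Delta$'' denotes multiset union. Deep-inference notation: for a formula $\chi$ with a designated occurrence of a subformula not in the scope of any negation, $\chi\{\eta\}$ denotes the result of replacing that occurrence by $\eta$. The cut-free calculus $\mathsf{GT}^-$ ($\alpha$ ranges over classical formulas, $\Lambda$ over multisets of classical formulas): axioms $\Gamma,p\Rightarrow p,\Delta$ and $\Gamma,\bot\Rightarrow\Delta$; (L$\neg$) from $\Gamma\Rightarrow\alpha,\Delta$ infer $\Gamma,\neg\alpha\Rightarrow\Delta$; (R$\neg$) from $\Gamma,\alpha\Rightarrow\Delta$ infer $\Gamma\Rightarrow\neg\alpha,\Delta$;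 (L$\wedge$) from $\Gamma,\phi,\psi\Rightarrow\Delta$ infer $\Gamma,\phi\wedge\psi\Rightarrow\Delta$; (R$\wedge$) from $\Gamma\Rightarrow\phi,\Lambda$ and $\Gamma\Rightarrow\psi,\Lambda$ infer $\Gamma\Rightarrow\phi\wedge\psi,\Lambda,\Delta$; (L$\vee$) from $\Gamma,\phi\Rightarrow\Lambda$ and $\Gamma,\psi\Rightarrow\Lambda$ infer $\Gamma,\phi\vee\psi\Rightarrow\Lambda,\Delta$; (R$\vee$) from $\Gamma\Rightarrow\phi,\psi,\Delta$ infer $\Gamma\Rightarrow\phi\vee\psi,\Delta$; (L$\mathbin{\backslash\!\!/}$) from $\Gamma,\chi\{\phi_L\}\Rightarrow\Delta$ and $\Gamma,\chi\{\phi_R\}\Rightarrow\Delta$ infer $\Gamma,\chi\{\phi_L\mathbin{\backslash\!\!/}\phi_R\}\Rightarrow\Delta$; (R$\mathbin{\backslash\!\!/}$) from $\Gamma\Rightarrow\chi\{\phi_i\},\Delta$ ($i\in\{L,R\}$) infer $\Gamma\Rightarrow\chi\{\phi_L\mathbin{\backslash\!\!/}\phi_R\},\Delta$. The height of a derivation consisting of a single axiom is $1$; otherwise it is $1$ plus the maximum height of the subderivations of the premises of its last rule. $\vdash^n\Gamma\Rightarrow\Delta$ means there is a $\mathsf{GT}^-$-derivation of $\Gamma\Rightarrow\Delta$ of height at most $n$. *)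

(* Defs.v *)
From Stdlib Require Import List Permutation Arith.
Import ListNotations.

Inductive form : Type :=
| Var  : nat -> form
| Bot  : form
| Neg  : form -> form
| And  : form -> form -> form
| Or   : form -> form -> form     (* split disjunction *)
| Ivee : form -> form -> form.    (* inquisitive disjunction *)

Fixpoint classical (f : form) : Prop :=
  match f with
  | Var _ | Bot => True
  | Neg a => classical a
  | And a b | Or a b => classical a /\ classical b
  | Ivee _ _ => False
  end.

Fixpoint wf (f : form) : Prop :=
  match f with
  | Var _ | Bot => True
  | Neg a => classical a
  | And a b | Or a b | Ivee a b => wf a /\ wf b
  end.

(* Deep-inference contexts chi{ } : the hole is never under a negation. *)
Inductive ctx : Type :=
| Hole  : ctx
| CAndL : ctx -> form -> ctx
| CAndR : form -> ctx -> ctx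
| COrL  : ctx -> form -> ctx
| COrR  : form -> ctx -> ctx
| CIvL  : ctx -> form -> ctx
| CIvR  : form -> ctx -> ctx.

Fixpoint plug (c : ctx) (e : form) : form :=
  match c with
  | Hole => e
  | CAndL c f => And (plug c e) f
  | CAndR f c => And f (plug c e)
  | COrL c f => Or (plug c e) f
  | COrR f c => Or f (plug c e)
  | CIvL c f => Ivee (plug c e) f
  | CIvR f c => Ivee f (plug c e)
  end.

(* Sequents Gamma => Delta: multisets represented by lists up to Permutation.
   Every rule's conclusion is stated up to permutation of its antecedent and
   succedent. *)
Inductive deriv : list form -> list form -> Type :=
| dAx G D G0 D0 p :
    Permutation G (Var p :: G0) -> Permutation D (Var p :: D0) -> deriv G D
| dBot G D G0 :
    Permutation G (Bot :: G0) -> deriv G D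
| dLNeg G D G0 a :
    classical a -> Permutation G (Neg a :: G0) ->
    deriv G0 (a :: D) -> deriv G D
| dRNeg G D D0 a :
    classical a -> Permutation D (Neg a :: D0) ->
    deriv (a :: G) D0 -> deriv G D
| dLAnd G D G0 f g :
    Permutation G (And f g :: G0) ->
    deriv (f :: g :: G0) D -> deriv G D
| dRAnd G D L D0 f g :
    Forall classical L ->
    Permutation D (And f g :: L ++ D0) ->
    deriv G (f :: L) -> deriv G (g :: L) -> deriv G D
| dLOr G D G0 L D0 f g :
    Forall classical L ->
    Permutation G (Or f g :: G0) ->
    Permutation D (L ++ D0) ->
    deriv (f :: G0) L -> deriv (g :: G0) L -> deriv G D
| dROr G D D0 f g :
    Permutation D (Or f g :: D0) ->
    deriv G (f :: g :: D0) -> deriv G D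
| dLIv G D G0 c fl fr :
    Permutation G (plug c (Ivee fl fr) :: G0) ->
    deriv (plug c fl :: G0) D -> deriv (plug c fr :: G0) D -> deriv G D
| dRIvL G D D0 c fl fr :
    Permutation D (plug c (Ivee fl fr) :: D0) ->
    deriv G (plug c fl :: D0) -> deriv G D
| dRIvR G D D0 c fl fr :
    Permutation D (plug c (Ivee fl fr) :: D0) ->
    deriv G (plug c fr :: D0) -> deriv G D.

Fixpoint height {G D} (d : deriv G D) : nat :=
  match d with
  | dAx _ _ _ _ _ _ _ => 1
  | dBot _ _ _ _ => 1
  | dLNeg _ _ _ _ _ _ d1 => S (height d1)
  | dRNeg _ _ _ _ _ _ d1 => S (height d1)
  | dLAnd _ _ _ _ _ _ d1 => S (height d1)
  | dRAnd _ _ _ _ _ _ _ _ d1 d2 => S (Nat.max (height d1) (height d2))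
  | dLOr _ _ _ _ _ _ _ _ _ _ d1 d2 => S (Nat.max (height d1) (height d2))
  | dROr _ _ _ _ _ _ d1 => S (height d1)
  | dLIv _ _ _ _ _ _ _ d1 d2 => S (Nat.max (height d1) (height d2))
  | dRIvL _ _ _ _ _ _ _ d1 => S (height d1)
  | dRIvR _ _ _ _ _ _ _ d1 => S (height d1)
  end.

Definition vdash (n : nat) (G D : list form) : Prop :=
  exists d : deriv G D, height d <= n.

(* Main.v *)
Require Import Defs.
From Stdlib Require Import List Permutation Arith Lia.
Import ListNotations.

Lemma weakL : forall G D (d : deriv G D) nu G',
  Permutation G' (nu :: G) -> exists d' : deriv G' D, height d' <= height d.
Proof.
  intros G D d; induction d; intros nu G' HG'.
  - assert (P : Permutation G' (Var p :: nu :: G0)) by (rewrite HG', p0; apply perm_swap).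
    exists (dAx _ _ _ _ _ P p1); simpl; lia.
  - assert (P : Permutation G' (Bot :: nu :: G0)) by (rewrite HG', p; apply perm_swap).
    exists (dBot _ D _ P); simpl; lia.
  - destruct (IHd nu (nu :: G0) (Permutation_refl _)) as [d1 H1].
    assert (P : Permutation G' (Neg a :: nu :: G0)) by (rewrite HG', p; apply perm_swap).
    exists (dLNeg _ _ _ _ c P d1); simpl; lia.
  - destruct (IHd nu (a :: G') ltac:(rewrite HG'; apply perm_swap)) as [d1 H1].
    exists (dRNeg _ _ _ _ c p d1); simpl; lia.
  - destruct (IHd nu (f :: g :: nu :: G0)
      ltac:(etransitivity; [apply perm_skip; apply perm_swap | apply perm_swap])) as [d1 H1].
    assert (P : Permutation G' (And f g :: nu :: G0)) by (rewrite HG', p; apply perm_swap).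
    exists (dLAnd _ _ _ _ _ P d1); simpl; lia.
  - destruct (IHd1 nu (G') HG') as [d1' H1].
    destruct (IHd2 nu (G') HG') as [d2' H2].
    exists (dRAnd _ _ _ _ _ _ f0 p d1' d2'); simpl; lia.
  - destruct (IHd1 nu (f :: nu :: G0) ltac:(apply perm_swap)) as [d1' H1].
    destruct (IHd2 nu (g :: nu :: G0) ltac:(apply perm_swap)) as [d2' H2].
    assert (P : Permutation G' (Or f g :: nu :: G0)) by (rewrite HG', p; apply perm_swap).
    exists (dLOr _ _ _ _ _ _ _ f0 P p0 d1' d2'); simpl; lia.
  - destruct (IHd nu G' HG') as [d1 H1].
    exists (dROr _ _ _ _ _ p d1); simpl; lia.
  - destruct (IHd1 nu (plug c fl :: nu :: G0) ltac:(apply perm_swap)) as [d1' H1].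
    destruct (IHd2 nu (plug c fr :: nu :: G0) ltac:(apply perm_swap)) as [d2' H2].
    assert (P : Permutation G' (plug c (Ivee fl fr) :: nu :: G0)) by (rewrite HG', p; apply perm_swap).
    exists (dLIv _ _ _ _ _ _ P d1' d2'); simpl; lia.
  - destruct (IHd nu G' HG') as [d1 H1].
    exists (dRIvL _ _ _ _ _ _ p d1); simpl; lia.
  - destruct (IHd nu G' HG') as [d1 H1].
    exists (dRIvR _ _ _ _ _ _ p d1); simpl; lia.
Qed.

Lemma weakR : forall G D (d : deriv G D) nu D',
  Permutation D' (nu :: D) -> exists d' : deriv G D', height d' <= height d.
Proof.
  intros G D d; induction d; intros nu D' HD'.
  - assert (P : Permutation D' (Var p :: nu :: D0)) by (rewrite HD', p1; apply perm_swap).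
    exists (dAx _ _ _ _ _ p0 P); simpl; lia.
  - exists (dBot _ D' _ p); simpl; lia.
  - destruct (IHd nu (a :: D') ltac:(rewrite HD'; apply perm_swap)) as [d1 H1].
    exists (dLNeg _ _ _ _ c p d1); simpl; lia.
  - destruct (IHd nu (nu :: D0) (Permutation_refl _)) as [d1 H1].
    assert (P : Permutation D' (Neg a :: nu :: D0)) by (rewrite HD', p; apply perm_swap).
    exists (dRNeg _ _ _ _ c P d1); simpl; lia.
  - destruct (IHd nu D' HD') as [d1 H1].
    exists (dLAnd _ _ _ _ _ p d1); simpl; lia.
  - assert (P : Permutation D' (And f g :: L ++ nu :: D0)).
    { rewrite HD', p. etransitivity; [apply perm_swap|]. apply perm_skip. apply Permutation_middle. }
    exists (dRAnd _ _ _ _ _ _ f0 P d1 d2); simpl; lia.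
  - assert (P : Permutation D' (L ++ nu :: D0)).
    { rewrite HD', p0. apply Permutation_middle. }
    exists (dLOr _ _ _ _ _ _ _ f0 p P d1 d2); simpl; lia.
  - destruct (IHd nu (f :: g :: nu :: D0)
      ltac:(etransitivity; [apply perm_skip; apply perm_swap | apply perm_swap])) as [d1 H1].
    assert (P : Permutation D' (Or f g :: nu :: D0)) by (rewrite HD', p; apply perm_swap).
    exists (dROr _ _ _ _ _ P d1); simpl; lia.
  - destruct (IHd1 nu D' HD') as [d1' H1].
    destruct (IHd2 nu D' HD') as [d2' H2].
    exists (dLIv _ _ _ _ _ _ p d1' d2'); simpl; lia.
  - destruct (IHd nu (plug c fl :: nu :: D0) ltac:(apply perm_swap)) as [d1 H1].
    assert (P : Permutation D' (plug c (Ivee fl fr) :: nu :: D0)) by (rewrite HD', p; apply perm_swap).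
    exists (dRIvL _ _ _ _ _ _ P d1); simpl; lia.
  - destruct (IHd nu (plug c fr :: nu :: D0) ltac:(apply perm_swap)) as [d1 H1].
    assert (P : Permutation D' (plug c (Ivee fl fr) :: nu :: D0)) by (rewrite HD', p; apply perm_swap).
    exists (dRIvR _ _ _ _ _ _ P d1); simpl; lia.
Qed.

Theorem lemma4p1 :
  forall (G D : list form) (nu : form) (n : nat),
    1 <= n -> Forall wf G -> Forall wf D -> wf nu ->
    (vdash n G D -> vdash n (nu :: G) D) /\
    (vdash n G D -> vdash n G (nu :: D)).
Proof.
  intros G D nu n _ _ _ _; split; intros [d Hd].
  - destruct (weakL G D d nu (nu :: G) (Permutation_refl _)) as [d' H].
    exists d'; lia.
  - destruct (weakR G D d nu (nu :: D) (Permutation_refl _)) as [d' H].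
    exists d'; lia.
Qed.
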